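(* Let $\lambda=(\lambda_1,\ldots,\lambda_n)\in\mathbb{C}^n$ have strictly negative real parts and let $C_\lambda$ be the associated real companion matrix. Let $D\in\mathbb{R}^{r\times nm}$ be such that the pair $(C_\lambda\otimes I_{m\times m},D)$ is observable, and let $P\in\mathbb{R}^{nm\times nm}$ be the unique symmetric positive definite solution of $$(C_\lambda\otimes I_{m\times m})^{T}P+P(C_\lambda\otimes I_{m\times m})+D^{T}D=0.$$ Let $x(t)\in\mathbb{R}^m$ solve $x^{(n)}=-\sum_{k=0}^{n-1}\kappa_{k,\lambda}x^{(k)}$ from the initial state $z_0=(x_0^{(0)},\ldots,x_0^{(n-1)})$, viewed as a vector in $\mathbb{R}^{nm}$ by stacking $x_0^{(0)},\ldots,x_0^{(n-1)}$. Then for all $t\ge 0$, $$x(t)\in\mathcal{E}\big(0,\ I_{m\times nm}P^{-1}I_{nm\times m},\ \|z_0\|_P\big).$$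
   Context: The coefficients $\kappa_{k,\lambda}\in\mathbb{R}$ are defined by $\prod_{i=1}^n(s-\lambda_i)=s^n+\sum_{k=0}^{n-1}\kappa_{k,\lambda}s^k$. $C_\lambda$ is the $n\times n$ matrix with $(C_\lambda)_{i,i+1}=1$ for $i=1,\ldots,n-1$, last row $[-\kappa_{0,\lambda},\ldots,-\kappa_{n-1,\lambda}]$, zeros elsewhere; with the stacked state $z=(x^{(0)},\ldots,x^{(n-1)})\in\mathbb{R}^{nm}$ the system reads $\dot z=(C_\lambda\otimes I_{m\times m})z$. $\otimes$ is the Kronecker product; $I_{m\times nm}=[I_m\ 0\ \cdots\ 0]$ and $I_{nm\times m}=I_{m\times nm}^T$. $\|z\|_P=\sqrt{z^TPz}$. For $c\in\mathbb{R}^m$, a symmetric positive semidefinite $\Sigma$ and $\rho\ge 0$, $\mathcal{E}(c,\Sigma,\rho)=\{c+\rho\,\Sigma^{1/2}u: u\in\mathbb{R}^m,\ \|u\|\le 1\}$ with $\Sigma^{1/2}$ the symmetric positive semidefinite square root. *)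

(* Defs.v *)
From HB Require Import structures.
From mathcomp Require Import all_boot all_order all_algebra.
From mathcomp Require Import all_classical all_reals all_analysis.
From mathcomp Require Import complex.
Set Implicit Arguments. Unset Strict Implicit. Unset Printing Implicit Defensive.
Import Order.TTheory GRing.Theory Num.Theory.
Local Open Scope ring_scope.

Lemma div_ord_proof (p q : nat) (i : 'I_(p * q)) : (i %/ q < p)%N.
Proof.
have := ltn_ord i; move: (nat_of_ord i) => {}i; case: q => [|q]; first by rewrite muln0 ltn0.
by move=> h; rewrite ltn_divLR.
Qed.
Definition div_ord (p q : nat) (i : 'I_(p * q)) : 'I_p := Ordinal (div_ord_proof i).

Lemma mod_ord_proof (p q : nat) (i : 'I_(p * q)) : (i %% q < q)%N.
Proof.
have := ltn_ord i; move: (nat_of_ord i) => {}i; case: q => [|q]; first by rewrite muln0 ltn0.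
by move=> _; rewrite ltn_mod.
Qed.
Definition mod_ord (p q : nat) (i : 'I_(p * q)) : 'I_q := Ordinal (mod_ord_proof i).

Lemma stack_idx_proof (n m : nat) (k : 'I_n) (j : 'I_m) : (k * m + j < n * m)%N.
Proof.
have hk := ltn_ord k; have hj := ltn_ord j.
apply: (@leq_trans (k * m + m)); first by rewrite ltn_add2l.
by rewrite -[X in (_ + X <= _)%N]mul1n -mulnDl addn1 leq_mul2r hk orbT.
Qed.
(* the position of component j of block k in the stacked vector (x^(0),...,x^(n-1)) *)
Definition stack_idx (n m : nat) (k : 'I_n) (j : 'I_m) : 'I_(n * m) :=
  Ordinal (stack_idx_proof k j).

Definition kron (R : pzRingType) (p q r s : nat) (A : 'M[R]_(p, q)) (B : 'M[R]_(r, s))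
  : 'M[R]_(p * r, q * s) :=
  \matrix_(i, j) (A (div_ord i) (div_ord j) * B (mod_ord i) (mod_ord j)).

Definition lam_poly (R : rcfType) (n : nat) (lam : 'I_n -> R[i]) : {poly R[i]} :=
  \prod_(i < n) ('X - (lam i)%:P).

Definition kappa (R : rcfType) (n : nat) (lam : 'I_n -> R[i]) (k : nat) : R :=
  complex.Re ((lam_poly lam)`_k).

Definition companion (R : rcfType) (n : nat) (lam : 'I_n -> R[i]) : 'M[R]_n :=
  \matrix_(i, j) (if i.+1 == n then - kappa lam j else ((j : nat) == i.+1)%:R).

Definition Isel (R : pzRingType) (m n : nat) : 'M[R]_(m, n * m) :=
  \matrix_(i, j) ((j : nat) == i)%:R.

(* observability of the pair (A, D): the only state producing zero output
   D A^k v = 0 for all k < N (i.e. the kernel of the observability matrix) is 0 *)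
Definition observable (R : pzRingType) (N r : nat) (A : 'M[R]_N) (D : 'M[R]_(r, N)) :=
  forall v : 'cV[R]_N, (forall k, (k < N)%N -> D *m (A ^+ k) *m v = 0) -> v = 0.

Definition posdef (R : numDomainType) (N : nat) (P : 'M[R]_N) :=
  forall v : 'cV[R]_N, v != 0 -> 0 < (v^T *m P *m v) 0 0.

Definition psd (R : numDomainType) (N : nat) (P : 'M[R]_N) :=
  forall v : 'cV[R]_N, 0 <= (v^T *m P *m v) 0 0.

Definition Pnorm (R : rcfType) (N : nat) (P : 'M[R]_N) (z : 'cV[R]_N) : R :=
  Num.sqrt ((z^T *m P *m z) 0 0).

Definition ellipsoid (R : rcfType) (m : nat) (c : 'cV[R]_m) (Sigma : 'M[R]_m) (rho : R)
  : set 'cV[R]_m :=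
  [set x | exists S : 'M[R]_m, [/\ S^T = S, psd S, S *m S = Sigma &
           exists u : 'cV[R]_m, (u^T *m u) 0 0 <= 1 /\ x = c + rho *: (S *m u)]].

(* Main.v *)
Require Import Defs.
From HB Require Import structures.
From mathcomp Require Import all_boot all_order all_algebra.
From mathcomp Require Import all_classical all_reals all_analysis.
From mathcomp Require Import complex.
Import Order.TTheory GRing.Theory Num.Theory.
Local Open Scope ring_scope.

Section Helpers.
Local Set Implicit Arguments. Local Unset Strict Implicit.
Section Alg.
Lemma interp (F : fieldType) (f : F -> F) (s : seq F) :
  exists p : {poly F}, forall x, x \in s -> p.[x] = f x.
Proof.
elim: s => [|a s [p hp]]; first by exists 0.
case: (boolP (a \in s)) => ha.
  by exists p => x; rewrite inE => /orP[/eqP->|]; auto.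
pose q := \prod_(b <- s) ('X - b%:P).
have qa : q.[a] != 0 by rewrite -/(root q a) root_prod_XsubC.
exists (p + ((f a - p.[a]) / q.[a]) *: q) => x.
rewrite inE hornerD hornerZ => /orP[/eqP->|xs].
  by rewrite divfK // addrC subrK.
have : root q x by rewrite root_prod_XsubC.
by move/eqP->; rewrite mulr0 addr0 hp.
Qed.
Local Open Scope sesquilinear_scope.
Lemma cpsd (R : rcfType) N (A : 'M[R]_N) : A^T = A -> psd A ->
  forall u : 'rV[R[i]]_N, 0 <= (u *m map_mx (real_complex R) A *m u ^t*) 0 0.
Proof.
move=> sA pA u.
set toC := real_complex R.
set a := map_mx (@complex.Re R) u.
set b := map_mx (@complex.Im R) u.
set X := map_mx toC a.
set Y := map_mx toC b.
have hu : u = X + 'i%C *: Y.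
  apply/matrixP => i j; rewrite !mxE; case: (u i j) => x y /=.
  by apply/eqP; rewrite eq_complex /= ?(mul0r, mulr0, mul1r, mulr1, subr0, addr0, add0r, oppr0) !eqxx.
have hc : u ^t* = X^T - 'i%C *: Y^T.
  apply/matrixP => i j; rewrite !mxE; case: (u j i) => x y /=.
  by apply/eqP; rewrite eq_complex /= ?(mul0r, mulr0, mul1r, mulr1, subr0, addr0, add0r, oppr0, sub0r) !eqxx.
set M := map_mx toC A.
have hM : M^T = M by rewrite /M map_trmx sA.
have hyx : (Y *m M *m X^T) 0 0 = (X *m M *m Y^T) 0 0.
  transitivity ((Y *m M *m X^T)^T 0 0); first by rewrite [RHS]mxE.
  by rewrite !trmx_mul trmxK hM mulmxA.
have hp : forall c : 'rV[R]_N, 0 <= (map_mx toC c *m M *m (map_mx toC c)^T) 0 0.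
  move=> c; rewrite map_trmx -!map_mxM mxE ler0c.
  by have := pA c^T; rewrite trmxK.
rewrite hc {1}hu !mulmxDl !mulmxBr -!scalemxAl -!scalemxAr.
move: hyx (hp a) (hp b); rewrite -/X -/Y.
set xx := X *m M *m X^T; set xy := X *m M *m Y^T.
set yx := Y *m M *m X^T; set yy := Y *m M *m Y^T.
rewrite !mxE => -> hxx hyy.

have -> : forall p q s : R[i], p - 'i%C * q + ('i%C * q - 'i%C * ('i%C * s)) = p + s.
  move=> p q s; rewrite addrA subrK mulrA -expr2 complex.sqr_i mulN1r opprK //.
exact: addr_ge0.
Qed.
Lemma horner_mx_tr (R : comNzRingType) n (A : 'M[R]_n.+1) p :
  (horner_mx A p)^T = horner_mx A^T p.
Proof.
elim/poly_ind: p => [|p c IH]; first by rewrite !rmorph0 trmx0.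
rewrite !rmorphD !rmorphM /= !horner_mx_X !horner_mx_C raddfD /= tr_scalar_mx.
congr (_ + _); rewrite -!mulmxE trmx_mul IH.
have := @comm_mx_horner _ _ A^T A^T p (erefl _); rewrite /comm_mx => ->.
by [].
Qed.

Lemma psd_sqrt (R : rcfType) N (A : 'M[R]_N) : A^T = A -> psd A ->
  exists S : 'M[R]_N, [/\ S^T = S, psd S & S *m S = A].
Proof.
case: N A => [|N] A sA pA.
  exists 0; split; first by rewrite trmx0.
  - by move=> v; rewrite mulmx0 mul0mx mxE.
  - by apply/matrixP => -[].
set toC := real_complex R.
set M := map_mx toC A.
have hMc : M ^t* = M.
  apply/matrixP => i j; rewrite !mxE -[in RHS]sA mxE; exact: conjc_real.
have nM : M \is normalmx by apply/normalmxP; rewrite hMc.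
have /orthomx_spectralP hM := nM.
move: hM; set U := spectralmx M; set d := spectral_diag M => hM.
have Uu : U \is unitarymx := spectral_unitarymx M.
have iU : invmx U = U^t* := invmx_unitary Uu.
have Uunit : U \in unitmx := spectral_unit M.
have hD : diag_mx d = U *m M *m U^t*.
  by rewrite -iU {1}hM !mulmxA mulmxV // mul1mx mulmxK.
have d0 : forall i, 0 <= d 0 i.
  move=> i; have := cpsd sA pA (row i U).
  suff -> : d 0 i = (row i U *m M *m (row i U)^t*) 0 0 by [].
  transitivity (diag_mx d i i); first by rewrite mxE eqxx mulr1n.
  by rewrite hD !mxE; apply: eq_bigr => k _; rewrite !mxE; apply: congr2 => //; apply: eq_bigr => l _; rewrite !mxE.
set dr := map_mx (@complex.Re R) d.
have hdr : forall i, d 0 i = toC (dr 0 i) /\ 0 <= dr 0 i.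
  move=> i; have := d0 i; rewrite complex.lecE /= mxE.
  case: (d 0 i) => x y /= /andP[/eqP -> ->]; by split.
have [p hp] := interp Num.sqrt [seq dr 0 i | i <- enum 'I_N.+1].
set S := horner_mx A p.
set s := map_mx toC (\row_i Num.sqrt (dr 0 i)).
have hSc : map_mx toC S = invmx U *m diag_mx s *m U.
  rewrite map_horner_mx -/M {1}hM. rewrite horner_mx_uconjC; last exact: Uunit. rewrite horner_mx_diag.
  congr (_ *m diag_mx _ *m _); apply/matrixP => k j; rewrite !mxE ord1.
  have [-> _] := hdr j; rewrite horner_map /= hp //.
  by apply: map_f; rewrite mem_enum.
exists S; split.
- by rewrite /S horner_mx_tr sA.
- move=> v; suff : 0 <= toC ((v^T *m S *m v) 0 0) by rewrite ler0c.
  have -> : toC ((v^T *m S *m v) 0 0) =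
     ((map_mx toC v)^T *m map_mx toC S *m map_mx toC v) 0 0.
    by rewrite map_trmx -!map_mxM [RHS]mxE.
  set vc := map_mx toC v.
  rewrite hSc iU.
  set w := U *m vc.
  have hw : vc^T *m U^t* = w^t*.
    apply/matrixP => i j; rewrite !mxE rmorph_sum; apply: eq_bigr => k _.
    rewrite !mxE rmorphM mulrC; congr (_ * _); exact/esym/conjc_real.
  rewrite !mulmxA hw -mulmxA mxE; apply: sumr_ge0 => k _.
  rewrite mul_mx_diag mxE mulrAC; apply: mulr_ge0.
    rewrite mxE mulrC [w^T 0 k]mxE; exact: mul_conjC_ge0.
  by rewrite mxE ler0c mxE sqrtr_ge0.
- apply: (map_mx_inj (f := toC)); rewrite map_mxM hSc -/M [RHS]hM.
  rewrite !mulmxA (mulmxK Uunit) -!mulmxA; congr (_ *m _); rewrite !mulmxA; congr (_ *m _).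
  rewrite mul_diag_mx; apply/matrixP => i j; rewrite !mxE.
  case: (eqVneq i j) => [->|_]; last by rewrite !mulr0n mulr0.
  have [h1 h0] := hdr j.
  rewrite ?eqxx !mulr1n -rmorphM -expr2 sqr_sqrtr; last by move: h0; rewrite mxE.
  by move: h1; rewrite mxE => h; symmetry; exact h.
Qed.
End Alg.
Lemma pd_unit (R : numFieldType) N (P : 'M[R]_N) : P^T = P -> posdef P -> P \in unitmx.
Proof.
move=> sP pP; rewrite -row_free_unit; apply: inj_row_free => v hv.
apply/eqP; apply/negPn/negP => hv0.
have : v^T != 0 by apply: contra hv0 => /eqP h; rewrite -[v]trmxK h trmx0.
by move/pP; rewrite trmxK hv mul0mx mxE ltxx.
Qed.

Lemma pd_inv (R : numFieldType) N (P : 'M[R]_N) : P^T = P -> posdef P ->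
  (invmx P)^T = invmx P /\ psd (invmx P).
Proof.
move=> sP pP; have Pu := pd_unit sP pP.
have sPi : (invmx P)^T = invmx P by rewrite trmx_inv sP.
split => // y.
have -> : y^T *m invmx P *m y = (invmx P *m y)^T *m P *m (invmx P *m y).
  by rewrite trmx_mul sPi -!mulmxA (mulKVmx Pu).
case: (eqVneq (invmx P *m y) 0) => [->|h]; first by rewrite mulmx0 mxE.
exact/ltW/pP.
Qed.

Lemma mxBE (R : zmodType) m n (A B : 'M[R]_(m, n)) i j : (A - B) i j = A i j - B i j.
Proof. by rewrite !mxE. Qed.

Lemma tr11 (R : Type) (A : 'M[R]_1) : A^T 0 0 = A 0 0.
Proof. by rewrite mxE. Qed.

Lemma key_ineq (R : numFieldType) N m (P : 'M[R]_N) (I : 'M[R]_(m, N)) (z : 'cV_N) (w : 'cV_m) :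
  P^T = P -> posdef P -> I *m invmx P *m I^T *m w = I *m z ->
  (w^T *m (I *m z)) 0 0 <= (z^T *m P *m z) 0 0.
Proof.
move=> sP pP hw; have Pu := pd_unit sP pP.
set q := invmx P *m I^T *m w.
have Pq : P *m q = I^T *m w by rewrite /q -mulmxA (mulKVmx Pu).
have psdP : psd P.
  move=> v; case: (eqVneq v 0) => [->|h]; first by rewrite mulmx0 mxE.
  exact/ltW/pP.
have := psdP (z - q).
have -> : (z - q)^T = z^T - q^T by apply/matrixP => i j; rewrite !mxE.
rewrite !mulmxBl !mulmxBr !mxBE.
have e1 : (z^T *m P *m q) 0 0 = (w^T *m (I *m z)) 0 0.
  by rewrite -mulmxA Pq mulmxA -trmx_mul -[LHS]tr11 [(_ *m w)^T]trmx_mul trmxK.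
have e2 : (q^T *m P *m z) 0 0 = (w^T *m (I *m z)) 0 0.
  by rewrite -e1 -[LHS]tr11 [(_ *m z)^T]trmx_mul [(q^T *m P)^T]trmx_mul trmxK sP mulmxA.
have e3 : (q^T *m P *m q) 0 0 = (w^T *m (I *m z)) 0 0.
  rewrite -mulmxA Pq (mulmxA q^T) -[q^T *m I^T]trmx_mul.
  have -> : I *m q = I *m z by rewrite /q !mulmxA hw.
  by rewrite -[LHS]tr11 [(_ *m w)^T]trmx_mul trmxK.
by rewrite e1 e2 e3 subrr subr0 subr_ge0.
Qed.
Lemma ellipsoid_mem (R : rcfType) N m (P : 'M[R]_N) (I : 'M[R]_(m, N)) (z z0 : 'cV[R]_N) (w : 'cV[R]_m) :
  P^T = P -> posdef P -> (z^T *m P *m z) 0 0 <= (z0^T *m P *m z0) 0 0 ->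
  I *m invmx P *m I^T *m w = I *m z ->
  (I *m z) \in ellipsoid 0 (I *m invmx P *m I^T) (Pnorm P z0).
Proof.
move=> sP pP hz hw.
set Sig := I *m invmx P *m I^T.
have [sPi psdPi] := pd_inv sP pP.
have sS : Sig^T = Sig by rewrite /Sig !trmx_mul trmxK sPi mulmxA.
have pS : psd Sig.
  by move=> v; have := psdPi (I^T *m v); rewrite trmx_mul trmxK !mulmxA.
have [S [sSS pSS hSS]] := psd_sqrt sS pS.
have psdP : psd P.
  move=> v; case: (eqVneq v 0) => [->|h]; first by rewrite mulmx0 mxE.
  exact/ltW/pP.
apply/mem_set; exists S; split => //.
set q0 := (z0^T *m P *m z0) 0 0.
have q0ge : 0 <= q0 := psdP z0.
case: (eqVneq q0 0) => hq.
  have hz0 : z = 0.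
    apply/eqP; apply/negPn/negP => hz0; have := pP _ hz0.
    by move=> h; have := lt_le_trans h hz; rewrite -/q0 hq ltxx.
  exists 0; split; first by rewrite trmx0 mul0mx mxE ler01.
  by rewrite hz0 !mulmx0 scaler0 addr0.
have q0gt : 0 < q0 by rewrite lt_neqAle eq_sym hq q0ge.
set rho := Pnorm P z0.
have rhogt : 0 < rho by rewrite /rho /Pnorm sqrtr_gt0.
have rho2 : rho * rho = q0 by rewrite -expr2 sqr_sqrtr.
have hrho : rho != 0 by rewrite gt_eqF.
have ww : (w^T *m S^T *m (S *m w)) = w^T *m (I *m z).
  by rewrite sSS mulmxA -(mulmxA w^T) hSS -hw !mulmxA.
exists (rho^-1 *: (S *m w)); split.
  have -> : (rho^-1 *: (S *m w))^T = rho^-1 *: (w^T *m S^T).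
    apply/matrixP => i j; rewrite !mxE; congr (_ * _); apply: eq_bigr => k _; by rewrite !mxE mulrC.
  rewrite -scalemxAl -scalemxAr scalerA mxE ww.
  have hX := le_trans (key_ineq sP pP hw) hz; rewrite -/q0 -rho2 in hX.
  rewrite -invfM mulrC ler_pdivrMr ?mul1r //; exact: mulr_gt0.
by rewrite add0r scalemxAr scalerA mulfV // scale1r mulmxA hSS hw.
Qed.
Lemma sel_range (R : rcfType) m n (P : 'M[R]_(n * m)) (z : 'cV[R]_(n * m)) :
  P^T = P -> posdef P ->
  exists w, Isel R m n *m invmx P *m (Isel R m n)^T *m w = Isel R m n *m z.
Proof.
case: n P z => [|n] P z sP pP.
  exists 0; rewrite mulmx0; apply/matrixP => i j; rewrite !mxE.
  by apply/esym/big1 => -[k hk]; exfalso; move: hk; rewrite mul0n.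
set I := Isel R m n.+1.
have Pu := pd_unit sP pP.
have [sPi _] := pd_inv sP pP.
have hIT : forall y : 'cV_m, I^T *m y = 0 -> y = 0.
  move=> y hy; apply/matrixP => i j; rewrite ord1 [RHS]mxE.
  have hi : (i < n.+1 * m)%N by apply: leq_trans (ltn_ord i) _; rewrite mulSn leq_addr.
  have := congr1 (fun M : 'cV_(n.+1 * m) => M (Ordinal hi) 0) hy; rewrite !mxE.
  rewrite (bigD1 i) //= big1 ?addr0; first by rewrite !mxE eqxx mul1r.
  move=> k hk; rewrite !mxE /=; move: hk; rewrite -val_eqE /= eq_sym => /negPf ->; by rewrite mul0r.
have pdPi : forall y : 'cV_(n.+1 * m), y != 0 -> 0 < (y^T *m invmx P *m y) 0 0.
  move=> y hy.
  have -> : y^T *m invmx P *m y = (invmx P *m y)^T *m P *m (invmx P *m y).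
    by rewrite trmx_mul sPi -!mulmxA (mulKVmx Pu).
  apply: pP; apply: contra hy => /eqP h.
  by rewrite -(mulKVmx Pu y) h mulmx0.
set Sig := I *m invmx P *m I^T.
have Su : Sig \in unitmx.
  rewrite -row_free_unit; apply: inj_row_free => v hv.
  apply/eqP; apply/negPn/negP => hv0.
  have hy : I^T *m v^T != 0.
    apply: contra hv0 => /eqP /hIT h; by rewrite -[v]trmxK h trmx0.
  have := pdPi _ hy.
  have hv2 : v *m I *m invmx P *m I^T = 0 by rewrite -hv /Sig !mulmxA.
  by rewrite trmx_mul !trmxK !mulmxA hv2 mul0mx mxE ltxx.
exists (invmx Sig *m (I *m z)); by rewrite (mulKVmx Su).
Qed.
Lemma stack_div_mod n m (i : 'I_(n * m)) : stack_idx (div_ord i) (mod_ord i) = i.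
Proof. by apply: val_inj => /=; rewrite -divn_eq. Qed.

Lemma div_stack n m (k : 'I_n) (j : 'I_m) : div_ord (stack_idx k j) = k.
Proof.
apply: val_inj => /=; have m0 : (0 < m)%N by apply: leq_ltn_trans (ltn_ord j).
by rewrite divnMDl // divn_small ?addn0.
Qed.

Lemma mod_stack n m (k : 'I_n) (j : 'I_m) : mod_ord (stack_idx k j) = j.
Proof. by apply: val_inj => /=; rewrite modnMDl modn_small. Qed.

Lemma sum_stack (V : nmodType) n m (G : 'I_(n * m) -> V) :
  \sum_l G l = \sum_(k < n) \sum_(j < m) G (stack_idx k j).
Proof.
rewrite [RHS]pair_big /=.
rewrite (reindex (fun p : 'I_n * 'I_m => stack_idx p.1 p.2)) //=.
exists (fun l => (div_ord l, mod_ord l)) => [[k j] _ | l _] /=.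
  by rewrite div_stack mod_stack.
by rewrite stack_div_mod.
Qed.

Lemma xcol (R : realType) n m (x : 'I_m -> R -> R) (kap : nat -> R) (t : R) :
  (forall j t, derive1n n (x j) t = - \sum_(k < n) kap k * derive1n k (x j) t) ->
  \col_j x j t = Isel R m n *m \col_l derive1n (div_ord l) (x (mod_ord l)) t.
Proof.
case: n => [|n] hode.
  apply/matrixP => j i; rewrite ord1 !mxE.
  have := hode j t; rewrite big_ord0 oppr0 /= => ->.
  by apply/esym/big1 => -[k hk]; exfalso; move: hk; rewrite mul0n.
apply/matrixP => j i; rewrite ord1 !mxE.
rewrite (bigD1 (stack_idx (ord0 : 'I_n.+1) j)) //= big1 ?addr0.
  by rewrite !mxE mod_stack /= mul0n add0n divn_small // eqxx mul1r.
move=> l hl; rewrite !mxE.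
have -> : ((l : nat) == j) = false.
  apply/negP => /eqP hlj; move: hl; rewrite -val_eqE /= mul0n add0n hlj eqxx //.
by rewrite mul0r.
Qed.
Lemma ode_deriv (R : realType) n m (lam : 'I_n -> R[i]) (x : 'I_m -> R -> R) :
  (forall j t, derive1n n (x j) t = - \sum_(k < n) kappa lam k * derive1n k (x j) t) ->
  forall (i : 'I_(n * m)) (t : R), 'D_1 (derive1n (div_ord i) (x (mod_ord i))) t =
     (kron (companion lam) (1%:M : 'M[R]_m) *m \col_l derive1n (div_ord l) (x (mod_ord l)) t) i 0.
Proof.
move=> hode i t.
rewrite -derive1E.
have [k [j ->]] : exists k j, i = stack_idx k j.
  by exists (div_ord i), (mod_ord i); rewrite stack_div_mod.
rewrite div_stack mod_stack.
have dS : derive1 (derive1n k (x j)) t = derive1n k.+1 (x j) t by [].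
rewrite dS.
rewrite mxE sum_stack.
transitivity (\sum_(k' < n) companion lam k k' * derive1n k' (x j) t).
  under eq_bigr => k' _ do rewrite mxE.
  case: (eqVneq k.+1 n) => hk.
    under eq_bigr => k' _ do rewrite mulNr.
    by rewrite sumrN -hode hk.
  have hk' : (k.+1 < n)%N by rewrite ltn_neqAle hk ltn_ord.
  rewrite (bigD1 (Ordinal hk')) //= eqxx mul1r big1 ?addr0 //.
  move=> k' hk2; rewrite (_ : ((k' : nat) == k.+1) = false) ?mul0r //.
  by apply/negP => /eqP h; move: hk2; rewrite -val_eqE /= h eqxx.
apply: eq_bigr => k' _; rewrite (bigD1 j) // big1 ?addr0.
  by rewrite /kron !mxE !div_stack !mod_stack eqxx mulr1; apply/esym/addr0.
move=> j' hj'; rewrite /kron !mxE !div_stack !mod_stack.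
move: hj' => /= /negPf; rewrite eq_sym => ->.
by rewrite mulr0n mulr0 mul0r.
Qed.
Lemma mxDE (R : nmodType) m n (A B : 'M[R]_(m, n)) i j : (A + B) i j = A i j + B i j.
Proof. by rewrite !mxE. Qed.
Lemma mxNE (R : zmodType) m n (A : 'M[R]_(m, n)) i j : (- A) i j = - A i j.
Proof. by rewrite !mxE. Qed.

Lemma bil_sum (R : comPzRingType) N (u v : 'cV[R]_N) (P : 'M[R]_N) :
  (u^T *m P *m v) 0 0 = \sum_i \sum_j u i 0 * P i j * v j 0.
Proof.
rewrite mxE exchange_big /=; apply: eq_bigr => j _; rewrite mxE mulr_suml.
by apply: eq_bigr => i _; rewrite mxE.
Qed.

Lemma lyap_decr (R : realType) N r (A P : 'M[R]_N) (D : 'M[R]_(r, N)) (f : 'I_N -> R -> R) :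
  (forall i t, derivable (f i) t 1) ->
  (forall i t, 'D_1 (f i) t = (A *m \col_l f l t) i 0) ->
  A^T *m P + P *m A + D^T *m D = 0 ->
  forall t, 0 <= t ->
  ((\col_l f l t)^T *m P *m (\col_l f l t)) 0 0 <= ((\col_l f l 0)^T *m P *m (\col_l f l 0)) 0 0.
Proof.
move=> df hdf hL t t0.
pose V : R -> R := \sum_(i < N) \sum_(j < N) (P i j *: (f i * f j)).
have VE : forall s, V s = ((\col_l f l s)^T *m P *m (\col_l f l s)) 0 0.
  move=> s; rewrite bil_sum /V fct_sumE; apply: eq_bigr => i _.
  rewrite fct_sumE; apply: eq_bigr => j _; rewrite !mxE /=.
  transitivity (P i j * (f i s * f j s)); first by [].
  by rewrite mulrA [P i j * _]mulrC.
pose dV s := \sum_(i < N) \sum_(j < N) P i j *: (f i s *: 'D_1 (f j) s + f j s *: 'D_1 (f i) s).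
have hdV : forall s : R, is_derive s (1 : R) V (dV s).
  move=> s; rewrite /V /dV; apply: is_derive_sum => i; apply: is_derive_sum => j.
  apply: is_deriveZ; apply: is_deriveM; exact: derivableP.
have dVle : forall s : R, dV s <= 0.
  move=> s; set zs := \col_l f l s.
  have -> : dV s = (zs^T *m P *m (A *m zs)) 0 0 + ((A *m zs)^T *m P *m zs) 0 0.
    rewrite !bil_sum -big_split; apply: eq_bigr => i _; rewrite -big_split.
    apply: eq_bigr => j _; rewrite -!hdf !mxE.
    change (P i j * (f i s * 'D_1 (f j) s + f j s * 'D_1 (f i) s) =
      f i s * P i j * 'D_1 (f j) s + 'D_1 (f i) s * P i j * f j s).
    rewrite mulrDr !mulrA [P i j * f i s]mulrC; congr (_ + _).
    by rewrite mulrC mulrA.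
  have hPA : P *m A + A^T *m P = - (D^T *m D).
    by apply/eqP; rewrite -addr_eq0 [P *m A + _]addrC hL.
  have -> : (zs^T *m P *m (A *m zs)) 0 0 + ((A *m zs)^T *m P *m zs) 0 0
      = (zs^T *m (P *m A + A^T *m P) *m zs) 0 0.
    by rewrite mulmxDr mulmxDl mxDE trmx_mul !mulmxA.
  rewrite hPA mulmxN mulNmx mxNE oppr_le0.
  rewrite mulmxA -trmx_mul -mulmxA mxE; apply: sumr_ge0 => k _.
  by rewrite mxE -expr2 sqr_ge0.
have [c _ hc] := MVT_segment t0 (fun x _ => hdV x)
  (derivable_within_continuous (fun x _ => @ex_derive _ _ _ _ _ _ _ (hdV x))).
rewrite -!VE -subr_le0 hc subr0; apply: mulr_le0_ge0 => //.
Qed.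
End Helpers.

Theorem proposition12 (R : realType) (n m r : nat) (lam : 'I_n -> R[i])
    (D : 'M[R]_(r, n * m)) (P : 'M[R]_(n * m))
    (x : 'I_m -> R -> R) (z0 : 'cV[R]_(n * m)) :
  (forall i, complex.Re (lam i) < 0) ->
  (forall k, complex.Im ((lam_poly lam)`_k) = 0) ->
  observable (kron (companion lam) (1%:M : 'M[R]_m)) D ->
  P^T = P -> posdef P ->
  (kron (companion lam) (1%:M : 'M[R]_m))^T *m P
    + P *m kron (companion lam) (1%:M : 'M[R]_m) + D^T *m D = 0 ->
  (forall j k t, (k < n)%N -> derivable (derive1n k (x j)) t 1) ->
  (forall j t, derive1n n (x j) t = - \sum_(k < n) kappa lam k * derive1n k (x j) t) ->
  (forall (k : 'I_n) j, derive1n k (x j) 0 = z0 (stack_idx k j) 0) ->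
  forall t : R, 0 <= t ->
    (\col_j x j t) \in
      ellipsoid 0 (Isel R m n *m invmx P *m (Isel R m n)^T) (Pnorm P z0).
Proof.
move=> _ _ _ sP pP hL hder hode hz0 t t0.
rewrite (xcol t hode).
have [w hw] := sel_range (\col_l derive1n (div_ord l) (x (mod_ord l)) t) sP pP.
apply: (ellipsoid_mem sP pP _ hw).
have -> : z0 = \col_l derive1n (div_ord l) (x (mod_ord l)) 0.
  by apply/matrixP => i j; rewrite ord1 mxE hz0 stack_div_mod.
apply: (lyap_decr _ (ode_deriv hode) hL t0).
by move=> i s; apply: hder.
Qed.
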